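(* Let $g$ be an $n$-person WTT game form, let $i\in[n]$, and let $j\neq k$ be elements of $X_i$. Then $H_j^{\neq}(k)$ is a constant region or $H_k^{\neq}(j)$ is a constant region (or both are).
   Context: Let $X_1,\dots,X_n$ and $A$ be finite nonempty sets. An $n$-person game form is a map $g: X_1\times\cdots\times X_n\to A$; elements of $X=X_1\times\cdots\times X_n$ are strategy profiles, elements of $A$ are outcomes. For a direction $i\in[n]$ write $X_{-i}=\prod_{t\neq i}X_t$, and for $s\in X_i$, $y\in X_{-i}$ write $(s,y)$ for the profile with $i$-th coordinate $s$ and other coordinates $y$. The hyperplane perpendicular to direction $i$ at $s\in X_i$ is $H_s=\{x\in X: x_i=s\}$. The game form $g$ is weakly totally tight (WTT) if for every $i\in[n]$, all $s\neq s'$ in $X_i$ and all $y\neq y'$ in $X_{-i}$, at least one of $g(s,y)=g(s,y')$, $g(s,y)=g(s',y)$, $g(s',y')=g(s',y)$, $g(s',y')=g(s,y')$ holds. A set $S\subseteq X$ is a constant region if there is $c\in A$ with $g(x)=c$ for all $x\in S$. For a direction $i$ and distinct $j,k\in X_i$, set $H_j^{\neq}(k)=\{(j,y): y\in X_{-i},\ g(j,y)\neq g(k,y)\}$ and $H_j^{=}(k)=H_j\setminus H_j^{\neq}(k)$. *)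

(* Defs.v *)
From HB Require Import structures.
From mathcomp Require Import all_boot.
Set Implicit Arguments. Unset Strict Implicit. Unset Printing Implicit Defensive.

Section GameForms.
Variables (n : nat) (X : 'I_n -> finType) (A : finType).

Definition profile := {dffun forall i : 'I_n, X i}.

Definition others (i : 'I_n) := {t : 'I_n | t != i}.

Definition profile_minus (i : 'I_n) :=
  {dffun forall t : others i, X (val t)}.

(* (s, y) : the profile with i-th coordinate s and other coordinates y *)
Definition join (i : 'I_n) (s : X i) (y : profile_minus i) : profile :=
  [ffun t : 'I_n =>
     match eqVneq t i with
     | EqNotNeq e => eq_rect_r X s e
     | NeqNotEq ne => y (exist _ t ne)
     end].

Definition game_form := profile -> A.

Definition WTT (g : game_form) : Prop :=
  forall (i : 'I_n) (s s' : X i) (y y' : profile_minus i),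
    s <> s' -> y <> y' ->
    g (join s y) = g (join s y') \/ g (join s y) = g (join s' y) \/
    g (join s' y') = g (join s' y) \/ g (join s' y') = g (join s y').

Definition constant_region (g : game_form) (S : {set profile}) : Prop :=
  exists c : A, forall x, x \in S -> g x = c.

Definition hyperplane (i : 'I_n) (j : X i) : {set profile} :=
  [set x : profile | x i == j].

Definition H_neq (g : game_form) (i : 'I_n) (j k : X i) : {set profile} :=
  [set x : profile | [exists y : profile_minus i,
     (x == join j y) && (g (join j y) != g (join k y))]].

Definition H_eq (g : game_form) (i : 'I_n) (j k : X i) : {set profile} :=
  hyperplane j :\: H_neq g j k.

End GameForms.

(* Main.v *)
Require Import Defs.
From HB Require Import structures.
From mathcomp Require Import all_boot.
From Stdlib Require Import Classical.

Theorem mainTheorem2 (n : nat) (X : 'I_n -> finType) (A : finType)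
  (hX : forall i, 0 < #|X i|) (hA : 0 < #|A|)
  (g : game_form X A) (hg : WTT g)
  (i : 'I_n) (j k : X i) (hjk : j != k) :
  constant_region g (H_neq g j k) \/ constant_region g (H_neq g k j).
Proof.
set f := fun y => g (join j y).
set h := fun y => g (join k y).
have key : forall y y', f y <> h y -> f y' <> h y' -> f y = f y' \/ h y = h y'.
  move=> y y' Dy Dy'.
  have [->|ne] := eqVneq y y'; first by left.
  have [E|[E|[E|E]]] := hg i j k y y' (elimTF eqP (negbTE hjk)) (elimTF eqP (negbTE ne)).
  - by left.
  - by case: Dy.
  - by right.
  - by case: Dy'; rewrite /f /h E.
case/card_gt0P: hA => a _.
destruct (classic (exists y1 y2, f y1 <> h y1 /\ f y2 <> h y2 /\ f y1 <> f y2))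
  as [[y1 [y2 [D1 [D2 N12]]]]|Hn].
- right; exists (h y1) => x; rewrite inE => /existsP [y /andP [/eqP -> /eqP Dy]].
  have Dy' : f y <> h y by move=> E; apply: Dy; rewrite -/(h y) -/(f y) E.
  change (h y = h y1).
  apply: NNPP => Ne.
  have H12 : h y1 = h y2 by case: (key _ _ D1 D2).
  case: (key _ _ Dy' D1) => // F1.
  case: (key _ _ Dy' D2) => [F2|]; last by rewrite -H12.
  by apply: N12; rewrite -F1 F2.
- destruct (classic (exists y0, f y0 <> h y0)) as [[y0 D0]|Hn0].
  + left; exists (f y0) => x; rewrite inE => /existsP [y /andP [/eqP -> /eqP Dy]].
    change (f y = f y0); apply: NNPP => Ne; apply: Hn.
    by exists y, y0; split=> //; split.
  + left; exists a => x; rewrite inE => /existsP [y /andP [_ /eqP Dy]].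
    by exfalso; apply: Hn0; exists y.
Qed.
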